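(* For every $n\ge1$, the infimum of the worst-case expected approximation ratio over all randomized monotone, task-independent, scale-free (MIS) task allocation algorithms for two machines and $n$ tasks equals $\inf_{\mathbb{P}\in\mathcal{P}_n}R_n(\mathbb{P})$, the infimum of the worst-case expected approximation ratio over the algorithms $\mathcal{A}^{\mathbb{P}}$, $\mathbb{P}\in\mathcal{P}_n$.
   Context: Scheduling on two machines with $n$ tasks. A processing-time matrix is $T\in\mathbb{R}_{++}^{2\times n}$; an allocation is $X\in\{0,1\}^{2\times n}$ with $X_{1j}+X_{2j}=1$; makespan $M(X,T)=\max_{i\in\{1,2\}}\sum_jX_{ij}T_{ij}$; $M^*(T)=\min_XM(X,T)$. A deterministic algorithm $\mathcal{A}$ maps each $T$ to an allocation $X^{\mathcal{A},T}$. It is monotone if for any $T,T'$ differing only in row $i$, $\sum_j(X^{\mathcal{A},T}_{ij}-X^{\mathcal{A},T'}_{ij})(T_{ij}-T'_{ij})\le0$; task-independent if whenever $T_{ij}=T'_{ij}$ for $i=1,2$ and a given task $j$, then $X^{\mathcal{A},T}_{ij}=X^{\mathcal{A},T'}_{ij}$ for $i=1,2$; scale-free if $X^{\mathcal{A},\lambda T}=X^{\mathcal{A},T}$ for all $\lambda>0$. A randomized algorithm is a random choice of a deterministic algorithm; it is a randomized MIS algorithm if with probability one the chosen deterministic algorithm is monotone, task-independent and scale-free. Its worst-case expected approximation ratio is $\sup_{T}\mathbf{E}[M(X^{\mathcal{A},T},T)]/M^*(T)$. $\mathcal{P}_n$ is the set of Borel probability measures on $\mathbb{R}^n$ supported in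 $\mathbb{R}_{++}^n$; for $\mathbb{P}\in\mathcal{P}_n$, algorithm $\mathcal{A}^{\mathbb{P}}$ draws $\mathbf{z}\sim\mathbb{P}$ and sends task $j$ to machine 1 iff $T_{1j}/T_{2j}<z_j$ (else to machine 2); $R_n(\mathbb{P})$ denotes its worst-case expected approximation ratio. *)

(* Defs.v *)
From HB Require Import structures.
From mathcomp Require Import all_boot all_order all_algebra.
From mathcomp Require Import all_classical all_reals all_analysis.
Set Implicit Arguments. Unset Strict Implicit. Unset Printing Implicit Defensive.
Import Order.TTheory GRing.Theory Num.Theory.
Import numFieldNormedType.Exports.
Local Open Scope classical_set_scope.
Local Open Scope ring_scope.

Section Sched.
Variables (R : realType) (n : nat).

(* processing-time matrices: row 0 = machine 1, row 1 = machine 2 *)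
Definition mat := 'M[R]_(2, n).
Definition pos_mat (T : mat) : Prop := forall i j, 0 < T i j.

(* an allocation X in {0,1}^{2 x n} with X_1j + X_2j = 1 is encoded by the
   machine x j : 'I_2 receiving task j; X_ij = [x j == i] *)
Definition alloc := {ffun 'I_n -> 'I_2}.
Definition Xind (x : alloc) (i : 'I_2) (j : 'I_n) : R := (x j == i)%:R.

Definition load (x : alloc) (T : mat) (i : 'I_2) : R :=
  \sum_(j < n) Xind x i j * T i j.
Definition mach1 : 'I_2 := ord0.
Definition mach2 : 'I_2 := @Ordinal 2 1 isT.
Definition makespan (x : alloc) (T : mat) : R :=
  Num.max (load x T mach1) (load x T mach2).
Definition opt_makespan (T : mat) : R :=
  \big[Num.min/makespan [ffun=> mach1] T]_(x : alloc) makespan x T.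

Definition det_alg := mat -> alloc.

Definition monotone (A : det_alg) : Prop :=
  forall (T T' : mat) (i : 'I_2), pos_mat T -> pos_mat T' ->
    (forall (i' : 'I_2) (j : 'I_n), i' != i -> T i' j = T' i' j) ->
    \sum_(j < n) (Xind (A T) i j - Xind (A T') i j) * (T i j - T' i j) <= 0.

Definition task_independent (A : det_alg) : Prop :=
  forall (T T' : mat) (j : 'I_n), pos_mat T -> pos_mat T' ->
    (forall i : 'I_2, T i j = T' i j) ->
    forall i : 'I_2, Xind (A T) i j = Xind (A T') i j.

Definition scale_free (A : det_alg) : Prop :=
  forall (T : mat) (lam : R), pos_mat T -> 0 < lam -> A (lam *: T) = A T.

Definition MIS (A : det_alg) : Prop :=
  [/\ monotone A, task_independent A & scale_free A].

(* randomized algorithm: a probability space (Omega, P) and a random choice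
   omega |-> A omega of deterministic algorithm, such that for each instance
   the produced allocation is a random variable *)
Definition expected_makespan d (Omega : measurableType d)
  (P : probability Omega R) (A : Omega -> det_alg) (T : mat) : \bar R :=
  (\int[P]_w (makespan (A w T) T)%:E)%E.

Definition worst_ratio d (Omega : measurableType d)
  (P : probability Omega R) (A : Omega -> det_alg) : \bar R :=
  ereal_sup [set (expected_makespan P A T * (opt_makespan T)^-1%:E)%E
            | T in pos_mat].

Definition randomized_MIS d (Omega : measurableType d)
  (P : probability Omega R) (A : Omega -> det_alg) : Prop :=
  (forall (T : mat) (x : alloc), pos_mat T -> measurable [set w | A w T = x])
  /\ {ae P, forall w, MIS (A w)}.

(* the threshold algorithms A^P, z drawn from a Borel probability on R^n *)
Definition algP (z : n.-tuple R) : det_alg :=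
  fun T => [ffun j => if T mach1 j / T mach2 j < tnth z j then mach1 else mach2].

Definition in_Pn (P : probability (n.-tuple R) R) : Prop :=
  P [set z | forall j, 0 < tnth z j] = 1%E.

Definition R_n (P : probability (n.-tuple R) R) : \bar R := worst_ratio P algP.

End Sched.

(* Main.v *)
Require Import Defs.
From HB Require Import structures.
From mathcomp Require Import all_boot all_order all_algebra.
From mathcomp Require Import all_classical all_reals all_analysis.
From mathcomp Require Import measurable_realfun ring lra.
Set Implicit Arguments. Unset Strict Implicit. Unset Printing Implicit Defensive.
Import Order.TTheory GRing.Theory Num.Theory.
Import numFieldNormedType.Exports.
Local Open Scope classical_set_scope.
Local Open Scope ring_scope.

Section Det.
Variables (R : realType) (n : nat).
Implicit Types (T : mat R n) (x : alloc n).

Lemma I2_cases (i : 'I_2) : i = mach1 \/ i = mach2.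
Proof. by case: i => [[|[|]]] //= ?; [left|right]; apply/val_inj. Qed.

Lemma mach21 : (mach2 == mach1) = false. Proof. by []. Qed.

Lemma Xind01 x i j : Xind R x i j = 0 \/ Xind R x i j = 1.
Proof. by rewrite /Xind; case: (x j == i); [right|left]. Qed.

Lemma Xind_ge0 x i j : 0 <= Xind R x i j.
Proof. by case: (Xind01 x i j) => ->. Qed.

Lemma Xind_le1 x i j : Xind R x i j <= 1.
Proof. by case: (Xind01 x i j) => ->. Qed.

Lemma Xind2 x j : Xind R x mach2 j = 1 - Xind R x mach1 j.
Proof.
rewrite /Xind; case: (I2_cases (x j)) => ->; rewrite eqxx //.
  by rewrite eq_sym mach21 subrr.
by rewrite mach21 subr0.
Qed.

Definition nonneg_mat T := forall i j, 0 <= T i j.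

Lemma pos_nonneg T : pos_mat T -> nonneg_mat T.
Proof. by move=> pT i j; apply: ltW. Qed.

Lemma load_ge0 x T i : nonneg_mat T -> 0 <= load x T i.
Proof. by move=> nT; apply: sumr_ge0 => j _; apply: mulr_ge0; [apply: Xind_ge0|]. Qed.

Lemma load_ge_term x T i j : nonneg_mat T -> Xind R x i j * T i j <= load x T i.
Proof.
move=> nT; rewrite /load (bigD1 j) //= lerDl.
by apply: sumr_ge0 => k _; apply: mulr_ge0; [apply: Xind_ge0|].
Qed.

Lemma load_le_row x T i : nonneg_mat T -> load x T i <= \sum_(j < n) T i j.
Proof.
move=> nT; apply: ler_sum => j _.
by rewrite -[leRHS]mul1r ler_wpM2r // Xind_le1.
Qed.

Definition Ssum T := \sum_(j < n) T mach1 j + \sum_(j < n) T mach2 j.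

Lemma makespan_le_S x T : nonneg_mat T -> makespan x T <= Ssum T.
Proof.
move=> nT; rewrite /makespan /Ssum ge_max; apply/andP; split.
  apply: le_trans (load_le_row _ _ nT) _; rewrite lerDl.
  by apply: sumr_ge0 => *.
apply: le_trans (load_le_row _ _ nT) _; rewrite lerDr.
by apply: sumr_ge0 => *.
Qed.

Lemma makespan_ge0 x T : nonneg_mat T -> 0 <= makespan x T.
Proof. by move=> nT; rewrite /makespan le_max load_ge0. Qed.

Lemma makespan_ge_load x T i : load x T i <= makespan x T.
Proof. by rewrite /makespan le_max; case: (I2_cases i) => ->; rewrite lexx ?orbT. Qed.

Lemma opt_le x T : opt_makespan T <= makespan x T.
Proof. by rewrite /opt_makespan (bigD1 x) //= ge_min lexx. Qed.

Lemma le_opt u T : (forall x, u <= makespan x T) -> u <= opt_makespan T.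
Proof.
move=> H; rewrite /opt_makespan; elim/big_ind: _ => //.
by move=> a b ua ub; rewrite le_min ua ub.
Qed.

Lemma makespan_mono x T T' : nonneg_mat T ->
  (forall i j, T i j <= T' i j) -> makespan x T <= makespan x T'.
Proof.
move=> nT le; rewrite /makespan; apply: le_max2; apply: ler_sum => j _;
  by apply: ler_wpM2l; [apply: Xind_ge0|].
Qed.

Lemma makespan_scale x T c : 0 <= c -> makespan x (c *: T) = c * makespan x T.
Proof.
move=> c0; rewrite /makespan /load.
have E : forall i, \sum_(j < n) Xind R x i j * (c *: T) i j =
    c * \sum_(j < n) Xind R x i j * T i j.
  by move=> i; rewrite mulr_sumr; apply: eq_bigr => j _; rewrite mxE; ring.
by rewrite !E maxr_pMr.
Qed.

Lemma opt_gt0 T : (1 <= n)%N -> pos_mat T -> 0 < opt_makespan T.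
Proof.
move=> n1 pT; pose j0 : 'I_n := Ordinal n1.
apply: lt_le_trans (_ : 0 < Num.min (T mach1 j0) (T mach2 j0)) _.
  by rewrite lt_min !pT.
apply: le_opt => x; apply: le_trans (makespan_ge_load x T (x j0)).
apply: le_trans (load_ge_term x (x j0) j0 (pos_nonneg pT)).
rewrite /Xind eqxx mul1r ge_min.
by case: (I2_cases (x j0)) => ->; rewrite lexx ?orbT.
Qed.


Definition colmat (j : 'I_n) (a b : R) : mat R n :=
  \matrix_(i, k) if k == j then (if i == mach1 then a else b) else 1.

Lemma colmat_pos j a b : 0 < a -> 0 < b -> pos_mat (colmat j a b).
Proof.
move=> a0 b0 i k; rewrite mxE; case: (k == j) => //.
by case: (i == mach1).
Qed.

Lemma colmat1 j a b : colmat j a b mach1 j = a.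
Proof. by rewrite mxE !eqxx. Qed.
Lemma colmat2 j a b : colmat j a b mach2 j = b.
Proof. by rewrite mxE eqxx mach21. Qed.

Lemma Xind_eq_mach1 x y j : Xind R x mach1 j = Xind R y mach1 j ->
  (x j == mach1) = (y j == mach1).
Proof.
rewrite /Xind; case: (x j == mach1); case: (y j == mach1) => //= /eqP;
  by rewrite ?oner_eq0 // eq_sym oner_eq0.
Qed.

Definition inD (A : det_alg R n) (j : 'I_n) (r : R) : bool :=
  A (colmat j r 1) j == mach1.

Lemma MIS_char (A : det_alg R n) T j : MIS A -> pos_mat T ->
  (A T j == mach1) = inD A j (T mach1 j / T mach2 j).
Proof.
move=> [_ ti sf] pT.
have b0 := pT mach2 j.
have sT : pos_mat ((T mach2 j)^-1 *: T).
  by move=> i k; rewrite mxE mulr_gt0 // invr_gt0.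
rewrite -(sf T (T mach2 j)^-1 pT) ?invr_gt0 //.
apply: Xind_eq_mach1; apply: ti => //.
  by apply: colmat_pos; [apply: divr_gt0|].
move=> i; case: (I2_cases i) => ->.
  by rewrite colmat1 mxE mulrC.
by rewrite colmat2 mxE mulVf // gt_eqF.
Qed.

Lemma MIS_down (A : det_alg R n) j r s : MIS A -> 0 < r -> r < s ->
  inD A j s -> inD A j r.
Proof.
move=> [mo _ _] r0 rs; rewrite /inD => Hs.
have s0 : 0 < s by apply: lt_trans rs.
have := mo (colmat j s 1) (colmat j r 1) mach1 (colmat_pos j s0 ltr01)
  (colmat_pos j r0 ltr01).
have -> : \sum_(k < n) (Xind R (A (colmat j s 1)) mach1 k - Xind R (A (colmat j r 1)) mach1 k) *
    (colmat j s 1 mach1 k - colmat j r 1 mach1 k) =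
  (Xind R (A (colmat j s 1)) mach1 j - Xind R (A (colmat j r 1)) mach1 j) * (s - r).
  rewrite (bigD1 j) //= big1 ?addr0; first by rewrite !colmat1.
  by move=> k /negbTE kj; rewrite !mxE kj subrr mulr0.
move=> /(_ _) H.
have {}H : (Xind R (A (colmat j s 1)) mach1 j - Xind R (A (colmat j r 1)) mach1 j) * (s - r) <= 0.
  apply: H => i' j' ne; rewrite !mxE; case: (j' == j) => //.
  by rewrite (negbTE ne).
move: H; rewrite /Xind (eqP Hs) eqxx.
case: (A (colmat j r 1) j == mach1) => //=.
rewrite subr0 mul1r subr_le0 => /(lt_le_trans rs); by rewrite ltxx.
Qed.


Definition scalerow (c : R) T : mat R n :=
  \matrix_(i, k) if i == mach1 then c * T i k else T i k.

Lemma scalerow_pos c T : 0 < c -> pos_mat T -> pos_mat (scalerow c T).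
Proof. by move=> c0 pT i k; rewrite mxE; case: (i == mach1); rewrite ?mulr_gt0. Qed.

Lemma scalerow_ratio c T j :
  scalerow c T mach1 j / scalerow c T mach2 j = c * (T mach1 j / T mach2 j).
Proof. by rewrite !mxE eqxx mach21 mulrA. Qed.

Lemma makespan_scalerow_ge x c T : 1 <= c -> nonneg_mat T ->
  makespan x T <= makespan x (scalerow c T).
Proof.
move=> c1 nT; apply: makespan_mono => // i k; rewrite mxE.
case: (i == mach1) => //; by rewrite ler_peMl.
Qed.

Lemma makespan_scalerow_le x c T : 1 <= c -> nonneg_mat T ->
  makespan x (scalerow c T) <= c * makespan x T.
Proof.
move=> c1 nT; rewrite -makespan_scale; last by apply: le_trans c1.
apply: makespan_mono.
  by move=> i k; rewrite mxE; case: (i == mach1); rewrite ?mulr_ge0 //; apply: le_trans c1.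
move=> i k; rewrite !mxE; case: (i == mach1) => //; by rewrite ler_peMl.
Qed.

Lemma opt_scalerow c T : 1 <= c -> nonneg_mat T ->
  opt_makespan (scalerow c T) <= c * opt_makespan T.
Proof.
move=> c1 nT; have c0 : 0 < c by apply: lt_le_trans c1.
rewrite -ler_pdivrMl //; apply: le_opt => x.
rewrite ler_pdivrMl //; apply: le_trans (opt_le x _) _.
exact: makespan_scalerow_le.
Qed.

Lemma term_le0 (u u' v v' z : R) : (u <= u' <-> v <= v') ->
  ((((u < z)%R : bool)%:R : R) - ((u' < z)%R : bool)%:R) * (v - v') <= 0.
Proof.
move=> H.
have [vv'|v'v] := leP v v'.
  have uu' := (proj2 H vv').
  case: (ltP u z); case: (ltP u' z) => //= h1 h2.
  - by rewrite subrr mul0r.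
  - by rewrite subr0 mul1r subr_le0.
  - have := le_lt_trans h2 (le_lt_trans uu' h1); by rewrite ltxx.
  - by rewrite subrr mul0r.
have u'u : u' < u.
  by rewrite ltNge; apply/negP => /H; rewrite leNgt v'v.
case: (ltP u z); case: (ltP u' z) => //= h1 h2.
- by rewrite subrr mul0r.
- have := lt_trans u'u h2; by rewrite ltNge h1.
- rewrite sub0r mulN1r oppr_le0 subr_ge0; exact: ltW.
- by rewrite subrr mul0r.
Qed.

Lemma Xind_algP z T j :
  Xind R (algP z T) mach1 j = (((T mach1 j / T mach2 j < tnth z j)%R : bool)%:R).
Proof. by rewrite /Xind /algP ffunE; case: (_ < _). Qed.

Lemma algP_MIS (z : n.-tuple R) : MIS (algP z).
Proof.
split.
- move=> T T' i pT pT' eq; apply: sumr_le0 => j _.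
  case: (I2_cases i) => -> in eq *.
    rewrite !Xind_algP -(eq mach2 j) //.
    apply: term_le0; have b0 := pT mach2 j.
    by rewrite ler_pM2r ?invr_gt0.
  rewrite !Xind2 !Xind_algP.
  have -> : forall a b c : R, (1 - a - (1 - b)) * c = (b - a) * c.
    by move=> *; ring.
  rewrite -(eq mach1 j) //.
  apply: term_le0; have a0 := pT mach1 j.
  by rewrite ler_pM2l // lef_pV2 // posrE ?pT ?pT'.
- move=> T T' j pT pT' eq i; rewrite /Xind /algP !ffunE.
  by rewrite !eq.
- move=> T lam pT l0; apply/ffunP => j; rewrite /algP !ffunE !mxE.
  by rewrite -mulf_div divff ?mul1r // gt_eqF.
Qed.

End Det.

Lemma mcapT d (T : measurableType d) (I : countType) (F : I -> set T) :
  (forall i, measurable (F i)) -> measurable (\bigcap_i F i).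
Proof.
move=> mF; rewrite -[X in measurable X]setCK setC_bigcap; apply: measurableC.
apply: countable_bigcupT_measurable => // i; exact: measurableC.
Qed.

Lemma fiber_mfun d (T : measurableType d) (R : realType) (F : finType)
  (g : T -> F) (h : F -> \bar R) :
  (forall a, measurable [set w | g w = a]) ->
  measurable_fun setT (fun w => h (g w)).
Proof.
move=> mg _ B mB; rewrite setTI.
have -> : (fun w => h (g w)) @^-1` B =
    \bigcup_a [set w | g w = a /\ B (h a)].
  apply/seteqP; split => w /=.
    by move=> Bw; exists (g w).
  by move=> [a _ [<-]].
apply: countable_bigcupT_measurable => // a.
case: (pselect (B (h a))) => Hb.
  by rewrite (_ : [set w | _] = [set w | g w = a]) //; apply/seteqP; split => w /= //; case.
by rewrite (_ : [set w | _] = set0) //; apply/seteqP; split => w /= //; case.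
Qed.

Lemma algP_fiber (R : realType) (n : nat) (T : mat R n) (x : alloc n) :
  measurable [set z : n.-tuple R | algP z T = x].
Proof.
have -> : [set z : n.-tuple R | algP z T = x] =
   \bigcap_j [set z : n.-tuple R |
      (T mach1 j / T mach2 j < tnth z j) = (x j == mach1)].
  apply/seteqP; split => z /=.
    move=> <- j; rewrite /algP ffunE; by case: ifP.
  move=> H; apply/ffunP => j; have Hj : _ := H j I; rewrite /algP ffunE Hj.
  by case: (I2_cases (x j)) => ->.
apply: mcapT => j.
have mt := @measurable_tnth _ _ n j measurableT
  _ (@measurable_itv _ `]T mach1 j / T mach2 j, +oo[).
rewrite setTI in mt.
set S := _ @^-1` _ in mt.
case: (x j == mach1).
  rewrite (_ : [set z | _] = S) //.
  apply/seteqP; split => z /=; rewrite /S /= in_itv /= andbT => ->//.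
rewrite (_ : [set z | _] = ~` S); first exact: measurableC.
apply/seteqP; split => z /=; rewrite /S /= in_itv /= andbT.
  by move=> -> .
by move/negP/negbTE.
Qed.

Section Hard.
Variables (R : realType) (n : nat) (d : measure_display) (Omega : measurableType d)
  (P : probability Omega R) (A : Omega -> det_alg R n).
Hypothesis mA : forall T x, pos_mat T -> measurable [set w | A w T = x].

Definition qseq (k : nat) : R :=
  if @choice.unpickle rat k is Some q then ratr q else 0.

Lemma qseq_dense a b : a < b -> exists k, a < qseq k < b.
Proof.
move=> ab; have [q] := rat_in_itvoo ab; rewrite in_itv /= => H.
by exists (choice.pickle q); rewrite /qseq choice.pickleK.
Qed.

Definition gfun j k w : \bar R :=
  if (0 < qseq k) && inD (A w) j (qseq k) then (qseq k)%:E else 0%E.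

Definition ez j w : \bar R := esups (fun k => gfun j k w) 0%N.

Lemma gfun_ge0 j k w : (0 <= gfun j k w)%E.
Proof. by rewrite /gfun; case: ifP => // /andP[/ltW q0 _]; rewrite lee_fin. Qed.

Lemma gfun_le_ez j k w : (gfun j k w <= ez j w)%E.
Proof. by apply: ereal_sup_ubound; exists k. Qed.

Lemma ez_gt x j w : (x < ez j w)%E -> exists k, (x < gfun j k w)%E.
Proof. by move=> /ereal_sup_gt [y [k _ <-]] xy; exists k. Qed.

Lemma ez_ge0 j w : (0 <= ez j w)%E.
Proof. exact: le_trans (gfun_ge0 j 0 w) (gfun_le_ez j 0 w). Qed.

Lemma P1 w j r : MIS (A w) -> 0 < r -> (r%:E < ez j w)%E -> inD (A w) j r.
Proof.
move=> mis r0 /ez_gt [k]; rewrite /gfun; case: ifP.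
  move=> /andP[q0 Hq]; rewrite lte_fin => rq.
  exact: MIS_down mis r0 rq Hq.
by move=> _; rewrite lte_fin ltNge (ltW r0).
Qed.

Lemma P2 w j s : MIS (A w) -> 0 < s -> inD (A w) j s -> (s%:E <= ez j w)%E.
Proof.
move=> mis s0 Hs; rewrite leNgt; apply/negP => lt.
have ez0 := ez_ge0 j w.
have fin : ez j w \is a fin_num by rewrite ge0_fin_numE // (lt_trans lt) ?ltry.
have lt' : fine (ez j w) < s by rewrite -lte_fin fineK.
have [k /andP[k1 k2]] := qseq_dense lt'.
have q0 : 0 < qseq k by apply: le_lt_trans k1; rewrite fine_ge0.
have Hq := MIS_down mis q0 k2 Hs.
have := gfun_le_ez j k w; rewrite /gfun q0 Hq /=.
by rewrite -(fineK fin) lee_fin leNgt k1.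
Qed.

Lemma mgfun j k : measurable_fun setT (gfun j k).
Proof.
case q0: (0 < qseq k).
  apply: (@fiber_mfun _ _ R _ (fun w => A w (colmat j (qseq k) 1))
    (fun x => if (0 < qseq k) && (x j == mach1) then (qseq k)%:E else 0%E)).
  by move=> a; apply: mA; apply: colmat_pos.
rewrite (_ : gfun j k = cst 0%E); first exact: measurable_cst.
by apply: funext => w; rewrite /gfun q0.
Qed.

Lemma mez j : measurable_fun setT (ez j).
Proof. exact: (measurable_fun_esups (fun k => mgfun j k) 0%N). Qed.


Definition zr j w : R :=
  if (0 < ez j w)%E && (ez j w < +oo)%E then fine (ez j w) else 1.

Lemma zr_gt0 j w : 0 < zr j w.
Proof.
rewrite /zr; case: ifP => // /andP[h1 h2].
by rewrite fine_gt0 // h1 h2.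
Qed.

Lemma mzr j : measurable_fun setT (zr j).
Proof.
apply/measurable_EFinP.
pose hh (e : \bar R) := if (0 < e)%E && (e < +oo)%E then e else 1%:E.
have -> : EFin \o zr j = hh \o ez j.
  apply: funext => w; rewrite /= /zr /hh; case: ifP => // /andP[h1 h2].
  by rewrite fineK // ge0_fin_numE ?h2 // ltW.
apply: measurableT_comp (mez j); move=> _ B mB; rewrite setTI.
pose I0 := [set` Interval (BRight (0%E : \bar R)) (BLeft (+oo%E : \bar R))].
have -> : hh @^-1` B = (I0 `&` B) `|`
    (~` I0 `&` [set _ | B 1%:E]).
  apply/seteqP; split => e /=; rewrite /hh /I0 /= in_itv /=.
    by case: ifP => H Be; [left|right].
  move=> [[H Be]|[H Be]]; case: ifP => H' //.
    by rewrite H in H'.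
apply: measurableU; apply: measurableI => //; first exact: emeasurable_itv.
  apply: measurableC; exact: emeasurable_itv.
case: (pselect (B 1%:E)) => Hb.
  by rewrite (_ : [set _ | _] = setT) //; apply/seteqP; split.
by rewrite (_ : [set _ | _] = set0) //; apply/seteqP; split.
Qed.

Definition zt w : n.-tuple R := [tuple zr j w | j < n].

Lemma mzt : measurable_fun setT zt.
Proof.
apply/measurable_fun_tnthP => j.
rewrite (_ : _ \o _ = zr j); first exact: mzr.
by apply: funext => w; rewrite /= tnth_mktuple.
Qed.

Definition ztm : {mfun Omega >-> n.-tuple R} :=
  HB.pack zt (isMeasurableFun.Build _ _ _ _ _ mzt).

Definition Pz := distribution P ztm.

Lemma Pz_in : in_Pn Pz.
Proof.
rewrite /in_Pn /Pz /distribution /pushforward.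
apply: (eq_trans _ (probability_setT P)); congr (P _).
apply/seteqP; split => w //= _ j.
by rewrite /zt tnth_mktuple zr_gt0.
Qed.


Local Notation W := (worst_ratio P A).

Lemma mM T : pos_mat T -> measurable_fun setT (fun w => (makespan (A w T) T)%:E).
Proof.
move=> pT; apply: (@fiber_mfun _ _ R _ (fun w => A w T) (fun x => (makespan x T)%:E)).
by move=> x; apply: mA.
Qed.

Lemma EM_ge0 T : pos_mat T -> (0 <= expected_makespan P A T)%E.
Proof.
move=> pT; apply: integral_ge0 => w _; rewrite lee_fin.
exact: makespan_ge0 (pos_nonneg pT).
Qed.

Lemma W_ub T : pos_mat T ->
  (expected_makespan P A T * (opt_makespan T)^-1%:E <= W)%E.
Proof. by move=> pT; apply: ereal_sup_ubound; exists T. Qed.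

Lemma ones_pos : pos_mat (const_mx 1 : mat R n).
Proof. by move=> i j; rewrite mxE. Qed.

Lemma W_ge0 : (1 <= n)%N -> (0 <= W)%E.
Proof.
move=> n1; apply: le_trans (W_ub ones_pos).
apply: mule_ge0; first exact: EM_ge0 ones_pos.
by rewrite lee_fin invr_ge0 ltW // (opt_gt0 n1 ones_pos).
Qed.

Lemma EM_le T w0 : (1 <= n)%N -> pos_mat T -> W = w0%:E ->
  (expected_makespan P A T <= (w0 * opt_makespan T)%:E)%E.
Proof.
move=> n1 pT HW; have o0 := opt_gt0 n1 pT.
have := W_ub pT; rewrite HW.
have := EM_ge0 pT; case: (expected_makespan P A T) => [e| |] //.
  by rewrite !lee_fin => e0; rewrite ler_pdivrMr.
by move=> _; rewrite gt0_mulye ?lte_fin ?invr_gt0 // leye_eq.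
Qed.

Lemma null_blowup w0 (E : set Omega) : (1 <= n)%N -> W = w0%:E -> measurable E ->
  (forall t, 0 < t -> exists U, [/\ pos_mat U, opt_makespan U <= n%:R &
     forall w, E w -> t <= makespan (A w U) U]) -> P E = 0%E.
Proof.
move=> n1 HW mE H.
have fin : P E \is a fin_num.
  by rewrite ge0_fin_numE // (le_lt_trans (probability_le1 P mE)) ?ltry.
set p := fine (P E).
have p0 : 0 <= p by rewrite fine_ge0.
have key : forall t, 0 < t -> t * p <= w0 * n%:R.
  move=> t t0; have [U [pU oU HU]] := H t t0.
  have : ((t * p)%:E <= (w0 * opt_makespan U)%:E)%E.
    apply: le_trans (EM_le n1 pU HW).
    rewrite EFinM /p fineK //.
    have -> : P E = P (E `&` setT) by rewrite setIT.
    rewrite -(integral_indic _ measurableT) //.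
    rewrite -ge0_integralZl_EFin //; first last.
      by apply: ltW.
      by apply/measurable_EFinP; exact: measurable_indic.
      apply: ge0_le_integral => //.
      - by move=> w _; rewrite -EFinM lee_fin mulr_ge0 // ?ltW.
      - apply/measurable_EFinP; apply: measurable_funM; first exact: measurable_cst.
        exact: measurable_indic.
      - exact: mM.
      - move=> w _; rewrite -EFinM lee_fin /indic.
        case: (pselect (E w)) => Ew.
          by rewrite mem_set // mulr1 HU.
        rewrite memNset // mulr0; apply: makespan_ge0; exact: pos_nonneg.
  rewrite lee_fin => h; apply: le_trans h _.
  have w00 : 0 <= w0 by rewrite -lee_fin -HW W_ge0.
  by rewrite ler_wpM2l.
have : p <= 0.
  rewrite leNgt; apply/negP => pp.
  have w00 : 0 <= w0 by rewrite -lee_fin -HW W_ge0.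
  have h1 : 0 < w0 * n%:R + 1.
    by apply: ltr_wpDl ltr01; apply: mulr_ge0.
  have := key ((w0 * n%:R + 1) / p) (divr_gt0 h1 pp); rewrite mulrVK ?unitfE ?gt_eqF //.
  by rewrite gerDl ler10.
move=> p0'; have pz : p = 0 by apply/le_anti; rewrite p0 p0'.
by rewrite -(fineK fin) -/p pz.
Qed.


Lemma null_bigcup (I : countType) (F : I -> set Omega) :
  (forall i, P.-negligible (F i)) -> P.-negligible (\bigcup_i F i).
Proof.
move=> H.
pose F' k := if @choice.unpickle I k is Some i then F i else set0.
have : P.-negligible (\bigcup_k F' k).
  apply: negligible_bigcup => k; rewrite /F'.
  by case: (choice.unpickle k) => [i|]; [apply: H|apply: negligible_set0].
apply: negligibleS => w [i _ Fw]; exists (choice.pickle i) => //.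
by rewrite /F' choice.pickleK.
Qed.

Lemma opt_row1 (U : mat R n) (i : 'I_2) : nonneg_mat U ->
  (forall k, U i k = 1) -> opt_makespan U <= n%:R.
Proof.
move=> nU H; apply: le_trans (opt_le [ffun => i] U) _.
rewrite /makespan ge_max.
have L : forall i', load [ffun => i] U i' = if i' == i then n%:R else 0.
  move=> i'; rewrite /load; case: ifP => [/eqP ->|ne].
    rewrite (eq_bigr (fun _ => 1)); last by move=> k _; rewrite /Xind ffunE eqxx mul1r H.
    by rewrite sumr_const card_ord.
  by rewrite big1 // => k _; rewrite /Xind ffunE eq_sym ne mul0r.
rewrite !L; by case: (mach1 == i); case: (mach2 == i); rewrite ?lexx ?ler0n.
Qed.

Lemma makespan_ge_entry (x : alloc n) (U : mat R n) j : nonneg_mat U ->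
  U (x j) j <= makespan x U.
Proof.
move=> nU; apply: le_trans (makespan_ge_load x U (x j)).
by apply: le_trans (load_ge_term x (x j) j nU); rewrite /Xind eqxx mul1r.
Qed.

Variable N0 : set Omega.
Hypothesis mN0 : measurable N0.
Hypothesis PN0 : P N0 = 0%E.
Hypothesis N0MIS : forall w, ~ N0 w -> MIS (A w).

Lemma Z0_null j w0 : (1 <= n)%N -> W = w0%:E ->
  P ([set w | (ez j w <= 0)%E] `\` N0) = 0%E.
Proof.
move=> n1 HW; apply: null_blowup n1 HW _ _.
  apply: measurableD => //.
  have := mez j measurableT (@emeasurable_itv R `]-oo, 0%E]); rewrite setTI.
  congr measurable; apply/seteqP; split => w /=; by rewrite in_itv.
move=> t t0; exists (colmat j 1 t); split.
- exact: colmat_pos.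
- apply: (@opt_row1 _ mach1); first exact/pos_nonneg/colmat_pos.
  by move=> k; rewrite mxE; case: (k == j).
- move=> w [ez0 nN]; have mis := N0MIS nN.
  have pU := colmat_pos j ltr01 t0.
  case: (I2_cases (A w (colmat j 1 t) j)) => Hx.
    have := MIS_char j mis pU; rewrite Hx eqxx colmat1 colmat2 => /esym Hd.
    have := P2 mis (divr_gt0 ltr01 t0) Hd => /le_trans /(_ ez0).
    by rewrite lee_fin leNgt divr_gt0.
  have := makespan_ge_entry (A w (colmat j 1 t)) j (pos_nonneg pU).
  by rewrite Hx colmat2.
Qed.

Lemma Zinf_null j w0 : (1 <= n)%N -> W = w0%:E ->
  P ([set w | ez j w = +oo%E] `\` N0) = 0%E.
Proof.
move=> n1 HW; apply: null_blowup n1 HW _ _.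
  apply: measurableD => //.
  have := mez j measurableT (@emeasurable_set1 R +oo%E); rewrite setTI.
  congr measurable; apply/seteqP; split => w /=; by [].
move=> t t0; exists (colmat j t 1); split.
- exact: colmat_pos.
- apply: (@opt_row1 _ mach2); first exact/pos_nonneg/colmat_pos.
  by move=> k; rewrite mxE mach21; case: (k == j).
- move=> w [ezy nN]; have mis := N0MIS nN.
  have pU := colmat_pos j t0 ltr01.
  have Hd : inD (A w) j t by apply: P1 mis t0 _; rewrite ezy ltry.
  have := MIS_char j mis pU; rewrite colmat1 colmat2 divr1 Hd => /eqP Hx.
  have := makespan_ge_entry (A w (colmat j t 1)) j (pos_nonneg pU).
  by rewrite Hx colmat1.
Qed.


Definition Nall := N0 `|` \bigcup_j
  (([set w | (ez j w <= 0)%E] `\` N0) `|` ([set w | ez j w = +oo%E] `\` N0)).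

Lemma mez_le j y : measurable [set w | (ez j w <= y)%E].
Proof. by have := emeasurable_fun_infty_c measurableT (mez j) y; rewrite setTI. Qed.
Lemma mez_lt j y : measurable [set w | (y < ez j w)%E].
Proof. by have := emeasurable_fun_o_infty measurableT (mez j) y; rewrite setTI. Qed.
Lemma mez_eq j : measurable [set w | ez j w = +oo%E].
Proof.
have := mez j measurableT (@emeasurable_set1 R +oo%E); rewrite setTI.
by congr measurable; apply/seteqP; split.
Qed.

Lemma mNall : measurable Nall.
Proof.
apply: measurableU => //; apply: countable_bigcupT_measurable => // j.
by apply: measurableU; apply: measurableD => //; [apply: mez_le|apply: mez_eq].
Qed.

Lemma PNall w0 : (1 <= n)%N -> W = w0%:E -> P Nall = 0%E.
Proof.
move=> n1 HW; apply/(measure_negligible mNall).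
apply: negligibleU; first by apply/negligibleP.
apply: null_bigcup => j; apply: negligibleU; apply/negligibleP.
- by apply: measurableD => //; apply: mez_le.
- exact: Z0_null n1 HW.
- by apply: measurableD => //; apply: mez_eq.
- exact: Zinf_null n1 HW.
Qed.

Variable T : mat R n.
Hypothesis pT : pos_mat T.

Definition cc (k : nat) : R := 1 + (k.+1%:R)^-1.
Definition rr j := T mach1 j / T mach2 j.
Definition Fk k := \bigcup_j
  ([set w | ((rr j)%:E < ez j w)%E] `&` [set w | (ez j w <= (cc k * rr j)%:E)%E]).
Definition Bad k := Nall `|` Fk k.

Lemma cc_ge1 k : 1 <= cc k.
Proof. by rewrite /cc lerDl invr_ge0. Qed.
Lemma cc_gt1 k : 1 < cc k.
Proof. by rewrite /cc ltrDl invr_gt0. Qed.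
Lemma rr_gt0 j : 0 < rr j.
Proof. by rewrite divr_gt0. Qed.

Lemma mBad k : measurable (Bad k).
Proof.
apply: measurableU; first exact: mNall.
apply: countable_bigcupT_measurable => // j.
by apply: measurableI; [apply: mez_lt|apply: mez_le].
Qed.

Lemma alloc_eq k w : ~ Bad k w -> algP (zt w) T = A w (scalerow (cc k) T).
Proof.
move=> nB.
have nN : ~ N0 w by move=> h; apply: nB; left; left.
have mis := N0MIS nN.
apply/ffunP => j; rewrite /algP ffunE /zt tnth_mktuple.
have ez0 : (0 < ez j w)%E.
  rewrite ltNge; apply/negP => h; apply: nB; left; right; exists j => //.
  by left.
have ezy : (ez j w < +oo)%E.
  rewrite ltNge leye_eq; apply/negP => /eqP h; apply: nB; left; right.
  by exists j => //; right.
have fin : ez j w \is a fin_num by rewrite ge0_fin_numE // ltW.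
have pTc := scalerow_pos (lt_le_trans ltr01 (cc_ge1 k)) pT.
have Hc := MIS_char j mis pTc; rewrite scalerow_ratio in Hc.
rewrite /zr ez0 ezy /=.
case: ltP => h.
  have h' : ((cc k * rr j)%:E < ez j w)%E.
    rewrite ltNge; apply/negP => h2; apply: nB; right; exists j => //; split => //.
    by rewrite /= -(fineK fin) lte_fin.
  have := P1 mis (mulr_gt0 (lt_le_trans ltr01 (cc_ge1 k)) (rr_gt0 j)) h'.
  by rewrite -/(rr j) -Hc => /eqP.
have h' : (ez j w < (cc k * rr j)%:E)%E.
  rewrite -(fineK fin) lte_fin; apply: le_lt_trans h _.
  by rewrite ltr_pMl ?rr_gt0 ?cc_gt1.
case: (I2_cases (A w (scalerow (cc k) T) j)) => // Hx.
have : inD (A w) j (cc k * rr j) by rewrite /rr -Hc Hx.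
move=> /(P2 mis (mulr_gt0 (lt_le_trans ltr01 (cc_ge1 k)) (rr_gt0 j))).
by rewrite leNgt h'.
Qed.


Lemma mMz : measurable_fun setT (fun w => (makespan (algP (zt w) T) T)%:E).
Proof.
apply: (@fiber_mfun _ _ R _ (fun w => algP (zt w) T) (fun x => (makespan x T)%:E)).
move=> x; have := mzt measurableT (algP_fiber T x); rewrite setTI.
by congr measurable.
Qed.

Lemma Ssum_ge0 : 0 <= Ssum T.
Proof. by apply: addr_ge0; apply: sumr_ge0 => j _; apply: ltW. Qed.

Lemma int_bound k w0 : (1 <= n)%N -> W = w0%:E ->
  (\int[P]_w (makespan (algP (zt w) T) T)%:E <=
    (w0 * (cc k * opt_makespan T) + Ssum T * fine (P (Bad k)))%:E)%E.
Proof.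
move=> n1 HW.
have w00 : 0 <= w0 by rewrite -lee_fin -HW W_ge0.
have pTc := scalerow_pos (lt_le_trans ltr01 (cc_ge1 k)) pT.
have nT := pos_nonneg pT.
apply: (@le_trans _ _ (\int[P]_w ((makespan (A w (scalerow (cc k) T)) (scalerow (cc k) T))%:E
     + (Ssum T)%:E * (\1_(Bad k) w)%:E))%E).
  apply: ge0_le_integral => //.
  - by move=> w _; rewrite lee_fin makespan_ge0.
  - exact: mMz.
  - apply: emeasurable_funD; first exact: mM.
    apply: emeasurable_funM; first exact: measurable_cst.
    by apply/measurable_EFinP; apply: measurable_indic; apply: mBad.
  - move=> w _; rewrite -EFinM -EFinD lee_fin /indic.
    case: (pselect (Bad k w)) => Bw.
      rewrite mem_set // mulr1; apply: le_trans (makespan_le_S _ nT) _.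
      by apply: ler_wpDl => //; apply: makespan_ge0; apply: pos_nonneg.
    rewrite memNset // mulr0 addr0 (alloc_eq Bw).
    exact: makespan_scalerow_ge (cc_ge1 k) nT.
rewrite ge0_integralD //; first last.
- apply: emeasurable_funM; first exact: measurable_cst.
  by apply/measurable_EFinP; apply: measurable_indic; apply: mBad.
- by move=> w _; rewrite -EFinM lee_fin mulr_ge0 ?Ssum_ge0 // indicE; case: (_ \in _).
- exact: mM.
- by move=> w _; rewrite lee_fin makespan_ge0 //; apply: pos_nonneg.
rewrite ge0_integralZl_EFin //; first last.
- exact: Ssum_ge0.
- by apply/measurable_EFinP; apply: measurable_indic; apply: mBad.
rewrite integral_indic ?mBad // ?setIT.
have finB : P (Bad k) \is a fin_num.
  by rewrite ge0_fin_numE // (le_lt_trans (probability_le1 P (mBad k))) ?ltry.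
have -> : ((Ssum T)%:E * P (Bad k))%E = (Ssum T * fine (P (Bad k)))%:E.
  by rewrite EFinM fineK.
rewrite EFinD; apply: leeD; last by [].
apply: le_trans (EM_le n1 pTc HW) _; rewrite lee_fin ler_wpM2l //.
  exact: opt_scalerow (cc_ge1 k) nT.
exact: mBad.
Qed.


Lemma cc_noninc k k' : (k <= k')%N -> cc k' <= cc k.
Proof.
move=> kk; rewrite /cc lerD2l lef_pV2 ?posrE ?ltr0Sn //.
by rewrite ler_nat ltnS.
Qed.

Lemma Bad_noninc : nonincreasing_seq Bad.
Proof.
move=> k k' kk; apply/subsetPset => w [|[j _ [h1 h2]]]; first by left.
right; exists j => //; split => //; apply: le_trans h2 _.
by rewrite lee_fin ler_wpM2r ?cc_noninc // ltW ?rr_gt0.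
Qed.

Lemma cc_eventually (r e : R) : 0 < r -> r < e ->
  exists K, forall k, (K <= k)%N -> cc k * r < e.
Proof.
move=> r0 re; have er : 0 < e - r by rewrite subr_gt0.
have x0 : 0 <= r / (e - r) by rewrite divr_ge0 // ltW.
exists (Num.bound (r / (e - r))) => k Kk.
have := archi_boundP x0 => hb.
have hk : r / (e - r) < k.+1%:R.
  apply: lt_le_trans hb _; rewrite ler_nat; exact: leqW.
have h1 : r < k.+1%:R * (e - r) by rewrite -ltr_pdivrMr.
have h2 : r / k.+1%:R < e - r by rewrite ltr_pdivrMr ?ltr0Sn // mulrC.
rewrite /cc mulrDl mul1r [_^-1 * r]mulrC.
move: h2; set y := r / _ => h2; lra.
Qed.

Lemma capBad_sub : \bigcap_k Bad k `<=` Nall.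
Proof.
move=> w Hw; case: (pselect (Nall w)) => // nN; exfalso.
have nB : forall j, exists K, forall k, (K <= k)%N ->
    ~ (((rr j)%:E < ez j w)%E /\ (ez j w <= (cc k * rr j)%:E)%E).
  move=> j.
  have nZ : ~ ez j w = +oo%E.
    move=> h; apply: (nN); right; exists j => //; right; split => //.
    by move=> h2; apply: (nN); left.
  case: (boolP ((rr j)%:E < ez j w)%E) => h; last by exists 0%N => k _ [].
  have fin : ez j w \is a fin_num.
    rewrite ge0_fin_numE ?ez_ge0 // ltNge leye_eq; apply/negP => /eqP; exact: nZ.
  have rlt : rr j < fine (ez j w) by rewrite -lte_fin fineK.
  have [K HK] := cc_eventually (rr_gt0 j) rlt.
  exists K => k Kk [_ h2]; move: h2; rewrite -(fineK fin) lee_fin leNgt.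
  by rewrite HK.
have [Kf HKf] := fin_all_exists nB.
pose K := \max_(j < n) Kf j.
have := Hw K I; case => // -[j _ Hj].
apply: (HKf j K) => //; rewrite /K.
exact: (leq_bigmax_cond j).
Qed.

Lemma Bad_small w0 eps : (1 <= n)%N -> W = w0%:E -> 0 < eps ->
  exists K, forall k, (K <= k)%N -> fine (P (Bad k)) < eps.
Proof.
move=> n1 HW e0.
have : P \o Bad @ \oo --> P (\bigcap_k Bad k).
  apply: nonincreasing_cvg_mu => //.
  - by rewrite (le_lt_trans (probability_le1 _ (mBad 0))) ?ltry.
  - exact: mBad.
  - by apply: bigcapT_measurable => k; exact: mBad.
  - exact: Bad_noninc.
have -> : P (\bigcap_k Bad k) = 0%E.
  apply/eqP; rewrite -measure_le0 -(PNall n1 HW); apply: le_measure => //.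
  - by rewrite inE; apply: bigcapT_measurable => k; exact: mBad.
  - by rewrite inE; exact: mNall.
  - exact: capBad_sub.
case/fine_cvg/(_ (interior (ball 0%R eps))).
  apply/open_nbhs_nbhs/(open_nbhs_ball _ (@PosNum _ eps _)).
  by [].
move=> N _ HN; exists N => k Nk.
have := HN k Nk => /interior_subset.
by rewrite /ball /= sub0r normrN => /(le_lt_trans (ler_norm _)).
Qed.


Lemma EMz_le w0 : (1 <= n)%N -> W = w0%:E ->
  (\int[P]_w (makespan (algP (zt w) T) T)%:E <= (w0 * opt_makespan T)%:E)%E.
Proof.
move=> n1 HW; apply/lee_addgt0Pr => e e0.
have w00 : 0 <= w0 by rewrite -lee_fin -HW W_ge0.
have o0 := opt_gt0 n1 pT.
have S0 := Ssum_ge0.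
have S1 : 0 < Ssum T + 1 by apply: ltr_wpDl S0 ltr01.
have e20 : 0 < e / 2 by rewrite divr_gt0.
have [K1 HK1] := Bad_small n1 HW (divr_gt0 e20 S1).
have [K2 HK2] : exists K2, forall k, (K2 <= k)%N ->
    cc k * (w0 * opt_makespan T) <= w0 * opt_makespan T + e / 2.
  have [w0z|w0p] := eqVneq w0 0.
    exists 0%N => k _; rewrite w0z !mul0r mulr0 add0r; exact: ltW.
  have r0 : 0 < w0 * opt_makespan T by rewrite mulr_gt0 // lt_neqAle eq_sym w0p.
  have lt1 : w0 * opt_makespan T < w0 * opt_makespan T + e / 2 by rewrite ltrDl.
  have [K HK] := cc_eventually r0 lt1.
  by exists K => k Kk; apply: ltW; apply: HK.
pose k := maxn K1 K2.
apply: le_trans (int_bound k n1 HW) _; rewrite -EFinD lee_fin.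
have hX : w0 * (cc k * opt_makespan T) <= w0 * opt_makespan T + e / 2.
  by rewrite mulrCA; apply: HK2; rewrite leq_maxr.
have hp := HK1 k (leq_maxl _ _).
have p0 : 0 <= fine (P (Bad k)) by rewrite fine_ge0.
have hY : Ssum T * fine (P (Bad k)) <= e / 2.
  apply: le_trans (_ : (Ssum T + 1) * fine (P (Bad k)) <= _).
    by rewrite ler_wpM2r // lerDl.
  by rewrite mulrC -ler_pdivlMr // ltW.
by apply: le_trans (lerD hX hY) _; rewrite -addrA -splitr.
Qed.

End Hard.

Lemma algP_rMIS (R : realType) (n : nat) (P : probability (n.-tuple R) R) :
  randomized_MIS P (@algP R n).
Proof.
split; first by move=> T x _; exact: algP_fiber.
by apply: aeW => z; exact: algP_MIS.
Qed.

Theorem corollary1 (R : realType) (n : nat) : (1 <= n)%N ->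
  ereal_inf [set r : \bar R | exists (d : measure_display)
      (Omega : measurableType d) (P : probability Omega R)
      (A : Omega -> det_alg R n),
      randomized_MIS P A /\ r = worst_ratio P A]
  = ereal_inf [set R_n P | P in @in_Pn R n].
Proof.
move=> n1; apply/le_anti/andP; split.
  apply: ereal_inf_le_tmp => _ [P' HP' <-].
  by exists _, _, P', (@algP R n); split; [exact: algP_rMIS|].
apply: le_ereal_inf_tmp => _ [d [Om [P [A [[mA Hae] ->]]]]].
have [N0 [mN0 PN0 HN0]] := Hae.
have N0MIS : forall w, ~ N0 w -> MIS (A w).
  by move=> w nN; apply/not_notP => nM; apply: nN; apply: HN0.
have W0 := W_ge0 P A n1.
case HW: (worst_ratio P A) => [w0| |] ; last by rewrite HW in W0.
  2: by rewrite leey.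
apply: le_trans (ereal_inf_lbound _) _.
  by exists (Pz P mA); [exact: Pz_in|].
apply: ge_ereal_sup => _ [T pT <-].
have o0 := opt_gt0 n1 pT.
rewrite /expected_makespan /Pz ge0_integral_distribution; first last.
- by move=> z; rewrite lee_fin makespan_ge0 //; apply: pos_nonneg.
- apply: (@fiber_mfun _ _ R _ (fun z => algP z T) (fun x => (makespan x T)%:E)).
  by move=> x; apply: algP_fiber.
apply: le_trans.
  apply: lee_wpmul2r; first by rewrite lee_fin invr_ge0 ltW.
  exact: (EMz_le mA mN0 PN0 N0MIS pT n1 HW).
by rewrite -EFinM mulrK // unitfE gt_eqF.
Qed.
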